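(* Let $a<b<c$ be elements of $\mathcal{C}_n$. An element $\alpha$ of the triangle $\triangle^{(n)}\{a,b,c\}$ is an idempotent lying in the interior of the triangle if and only if $\alpha$ is a right identity of $\triangle^{(n)}\{a,b,c\}$.
   Context: $\mathcal{C}_n=\{0,1,\dots,n-1\}$ with its usual order; $\widehat{\mathcal{E}}_{\mathcal{C}_n}$ is the set of all order-preserving maps $\mathcal{C}_n\to\mathcal{C}_n$ (not required to fix $0$), a semiring with $(\alpha+\beta)(x)=\max(\alpha(x),\beta(x))$ and $(\alpha\cdot\beta)(x)=\beta(\alpha(x))$. The triangle $\triangle^{(n)}\{a,b,c\}$ is the set of all $\alpha\in\widehat{\mathcal{E}}_{\mathcal{C}_n}$ with image in $\{a,b,c\}$; its interior is the set of its elements whose image is exactly $\{a,b,c\}$ (i.e. not lying in any of the strings of maps with image in $\{a,b\}$, $\{a,c\}$ or $\{b,c\}$). Idempotent means $\alpha\cdot\alpha=\alpha$; a right identity is $e$ with $\beta\cdot e=\beta$ for all $\beta$ in the triangle. *)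

(* Defs.v *)
From mathcomp Require Import all_boot.
Set Implicit Arguments. Unset Strict Implicit. Unset Printing Implicit Defensive.

(* C_n = 'I_n with its usual order; endomorphisms are finite functions. *)
Definition endo (n : nat) := {ffun 'I_n -> 'I_n}.

(* order-preserving (not required to fix 0) *)
Definition order_preserving n (f : endo n) : bool :=
  [forall x : 'I_n, forall y : 'I_n, (x <= y) ==> (f x <= f y)].

(* semiring product: (alpha * beta)(x) = beta(alpha(x)) *)
Definition emul n (alpha beta : endo n) : endo n := [ffun x => beta (alpha x)].

Definition im n (alpha : endo n) : {set 'I_n} := [set alpha x | x : 'I_n].

Definition in_triangle n (a b c : 'I_n) (alpha : endo n) : bool :=
  order_preserving alpha && (im alpha \subset [set a; b; c]).

Definition in_interior n (a b c : 'I_n) (alpha : endo n) : bool :=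
  in_triangle a b c alpha && (im alpha == [set a; b; c]).

Definition idempotent_map n (alpha : endo n) : Prop := emul alpha alpha = alpha.

Definition right_identity n (a b c : 'I_n) (e : endo n) : Prop :=
  forall beta : endo n, in_triangle a b c beta -> emul beta e = beta.

(* Main.v *)
Require Import Defs.
From mathcomp Require Import all_boot.

Lemma fix_of_idem n (alpha : endo n) z :
  idempotent_map alpha -> z \in im alpha -> alpha z = z.
Proof.
move=> Hi /imsetP [y _ ->].
by have := congr1 (fun f : endo n => f y) Hi; rewrite /emul ffunE.
Qed.

Lemma const_tri n (a b c d : 'I_n) : d \in [set a; b; c] ->
  in_triangle a b c [ffun _ => d].
Proof.
move=> Hd; apply/andP; split.
  by apply/forallP => x; apply/forallP => y; rewrite !ffunE leqnn implybT.
apply/subsetP => z /imsetP [y _ ->]; by rewrite ffunE.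
Qed.

Theorem proposition32 (n : nat) (a b c : 'I_n) (alpha : endo n) :
  a < b -> b < c -> in_triangle a b c alpha ->
  ((idempotent_map alpha /\ in_interior a b c alpha) <-> right_identity a b c alpha).
Proof.
move=> _ _ Ht; split.
  move=> [Hi /andP [_ /eqP Him]] beta /andP [_ Hs].
  apply/ffunP => x; rewrite /emul ffunE.
  apply: fix_of_idem => //; rewrite Him.
  by apply: (subsetP Hs); apply/imsetP; exists x.
move=> Hr.
have Hfix : forall d, d \in [set a; b; c] -> alpha d = d.
  move=> d Hd; have := Hr _ (@const_tri n a b c d Hd).
  by move/(congr1 (fun f : endo n => f d)); rewrite /emul !ffunE.
split; first exact: Hr.
rewrite /in_interior Ht /=; rewrite eqEsubset; case/andP: Ht => _ -> /=.
apply/subsetP => d Hd; apply/imsetP; exists d => //; by rewrite Hfix.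
Qed.
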